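(* Let $S$ be an inverse monoid and $(X,E(S),p)$ a (global) presheaf of geodesic metric spaces on which $S$ acts properly and coboundedly. Then $S$ is quasi-finitely generated, i.e. there is a finite subset $\mathcal M\subseteq S$ with $\mathcal M=\mathcal M^{-1}$ such that $S$ is generated as a semigroup by $\mathcal M\cup E(S)$.
   Context: An inverse monoid is a monoid $S$ (identity $1$) in which every $s$ has a unique $s^{-1}$ with $ss^{-1}s=s$, $s^{-1}ss^{-1}=s^{-1}$; $E(S)$ is its set of idempotents, a meet-semilattice with meet $ef$. Presheaf: a set $X$ with maps $p\colon X\to E(S)$ and $X\times E(S)\to X$ such that $(x\cdot e)\cdot f=x\cdot ef$, $x\cdot p(x)=x$, $p(x\cdot e)=p(x)e$; fibers $X_e=p^{-1}(e)$. A (global) presheaf of metric spaces additionally has $p$ surjective, each $X_e$ a metric space $d_e$, and $d_e(x,y)\ge d_{ef}(x\cdot f,y\cdot f)$ for $x,y\in X_e$; $d(x,y)=d_e(x,y)$ for $x,y\in X_e$ and $\infty$ across fibers. Geodesic: finite distances $D$ are realised by isometric embeddings of $[0,D]$. Action: a right action $X\times S\to X$ extending the presheaf map on $E(S)$, with $p(x\cdot s)=s^{-1}p(x)s$ and $d_e(x,y)\ge d_{s^{-1}es}(x\cdot s,y\cdot s)$ for $x,y\in X_e$. Proper: for every $y_1\in X_1$ and $R\ge0$ there is a finite $\mathcal C\subseteq S$ with $\{s: d(y_1\cdot s,y_1\cdot s^{-1}s)\le R\}\subseteq\{ce: c\in\mathcal C,e\in E(S)\}$. Cobounded: there are $x_1\in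 X_1$, $T\ge0$ such that every point of $X$ equals $y\cdot s$ for some $s\in S$ and $y$ with $d(x_1,y)\le T$. *)

(* Defs.v *)
From Stdlib Require Import Reals Lra List.
Open Scope R_scope.
Set Implicit Arguments.

Record InverseMonoid := {
  im_car :> Type;
  im_mul : im_car -> im_car -> im_car;
  im_one : im_car;
  im_inv : im_car -> im_car;
  im_assoc : forall a b c, im_mul a (im_mul b c) = im_mul (im_mul a b) c;
  im_one_l : forall a, im_mul im_one a = a;
  im_one_r : forall a, im_mul a im_one = a;
  im_inv_1 : forall s, im_mul (im_mul s (im_inv s)) s = s;
  im_inv_2 : forall s, im_mul (im_mul (im_inv s) s) (im_inv s) = im_inv s;
  im_inv_uniq : forall s t, im_mul (im_mul s t) s = s ->
                  im_mul (im_mul t s) t = t -> t = im_inv s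
}.

Definition idempotent {S : InverseMonoid} (e : im_car S) : Prop := im_mul S e e = e.

(** * Presheaves of metric spaces with an action of S.
    The distance [dist] is a real-valued function; it is only meaningful
    on pairs in the same fiber (d = +infinity across fibers). *)
Record PresheafAction (S : InverseMonoid) := {
  pa_X :> Type;
  pa_p : pa_X -> S;
  pa_act : pa_X -> S -> pa_X;
  pa_dist : pa_X -> pa_X -> R;
  (* p lands in E(S) and is surjective onto E(S) (global presheaf) *)
  pa_p_idem : forall x, idempotent (pa_p x);
  pa_p_surj : forall e : S, idempotent e -> exists x, pa_p x = e;
  pa_res_comp : forall x e f, idempotent e -> idempotent f ->
      pa_act (pa_act x e) f = pa_act x (im_mul S e f);
  pa_res_p : forall x, pa_act x (pa_p x) = x;
  pa_res_fiber : forall x e, idempotent e ->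
      pa_p (pa_act x e) = im_mul S (pa_p x) e;
  pa_d_nonneg : forall x y, pa_p x = pa_p y -> 0 <= pa_dist x y;
  pa_d_zero : forall x y, pa_p x = pa_p y -> (pa_dist x y = 0 <-> x = y);
  pa_d_sym : forall x y, pa_p x = pa_p y -> pa_dist x y = pa_dist y x;
  pa_d_tri : forall x y z, pa_p x = pa_p y -> pa_p y = pa_p z ->
      pa_dist x z <= pa_dist x y + pa_dist y z;
  pa_res_lip : forall x y f, pa_p x = pa_p y -> idempotent f ->
      pa_dist (pa_act x f) (pa_act y f) <= pa_dist x y;
  pa_act_comp : forall x s t, pa_act (pa_act x s) t = pa_act x (im_mul S s t);
  pa_act_fiber : forall x s,
      pa_p (pa_act x s) = im_mul S (im_mul S (im_inv S s) (pa_p x)) s;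
  pa_act_lip : forall x y s, pa_p x = pa_p y ->
      pa_dist (pa_act x s) (pa_act y s) <= pa_dist x y
}.

Section Props.
Variable S : InverseMonoid.
Variable X : PresheafAction S.

(** finite distance at most r (d(x,y) <= r, with d = oo across fibers) *)
Definition dle (x y : X) (r : R) : Prop :=
  pa_p X x = pa_p X y /\ pa_dist X x y <= r.

Definition geodesic : Prop :=
  forall x y : X, pa_p X x = pa_p X y ->
    exists g : R -> X, g 0 = x /\ g (pa_dist X x y) = y /\
      forall t u, 0 <= t <= pa_dist X x y -> 0 <= u <= pa_dist X x y ->
        pa_p X (g t) = pa_p X x /\ pa_dist X (g t) (g u) = Rabs (t - u).

Definition proper_action : Prop :=
  forall (y1 : X) (r : R), pa_p X y1 = im_one S -> 0 <= r ->
    exists C : list S, forall s : S,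
      dle (pa_act X y1 s) (pa_act X y1 (im_mul S (im_inv S s) s)) r ->
      exists c e, In c C /\ idempotent e /\ s = im_mul S c e.

Definition cobounded_action : Prop :=
  exists (x1 : X) (T : R), pa_p X x1 = im_one S /\ 0 <= T /\
    forall x : X, exists (s : S) (y : X), dle x1 y T /\ x = pa_act X y s.
End Props.

Definition prod_ne {S : InverseMonoid} (a : S) (l : list S) : S :=
  fold_left (im_mul S) l a.

Definition semigroup_generated_by {S : InverseMonoid} (G : S -> Prop) : Prop :=
  forall s : S, exists (a : S) (l : list S),
    G a /\ Forall G l /\ s = prod_ne a l.

Definition quasi_finitely_generated (S : InverseMonoid) : Prop :=
  exists M : list S,
    (forall m, In m M <-> In (im_inv S m) M) /\
    semigroup_generated_by (S:=S) (fun s : S => In s M \/ idempotent s).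

(* Main.v *)
Require Import Defs.
From Stdlib Require Import Reals List Lra Lia ZArith.

Lemma fold_mul (S : InverseMonoid) : forall (l : list S) x a,
  fold_left (im_mul S) l (im_mul S x a) = im_mul S x (fold_left (im_mul S) l a).
Proof.
  induction l as [|b l IH]; simpl; intros; [reflexivity|].
  rewrite <- im_assoc; apply IH.
Qed.

Lemma inv_inv (S : InverseMonoid) (a : S) : im_inv S (im_inv S a) = a.
Proof.
  symmetry; apply im_inv_uniq; [apply im_inv_2 | apply im_inv_1].
Qed.

Lemma dle_trans (S : InverseMonoid) (X : PresheafAction S) (x y z : X) a b :
  dle X x y a -> dle X y z b -> dle X x z (a + b).
Proof.
  intros [H1 H2] [H3 H4]; split; [congruence|].
  pose proof (pa_d_tri X x y z H1 H3); lra.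
Qed.

Lemma step (S : InverseMonoid) (X : PresheafAction S) (x1 : X) (C : list S) r :
  pa_p X x1 = im_one S ->
  (forall s, dle X (pa_act X x1 s) (pa_act X x1 (im_mul S (im_inv S s) s)) r ->
      exists c e, In c C /\ idempotent e /\ s = im_mul S c e) ->
  forall t t', dle X (pa_act X x1 t) (pa_act X x1 t') r ->
  exists c g, In c C /\ idempotent g /\ t' = im_mul S (im_mul S c g) t.
Proof.
  intros Hx1 HC t t' [Hf Hd].
  set (m := im_mul S t' (im_inv S t)).
  set (f := im_mul S t (im_inv S t)).
  assert (Hfi : idempotent f).
  { unfold idempotent, f. rewrite im_assoc. rewrite im_inv_1. reflexivity. }
  assert (Hd2 : dle X (pa_act X x1 m) (pa_act X x1 f) r).
  { unfold m, f. rewrite <- !pa_act_comp. split.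
    - rewrite (pa_act_fiber X (pa_act X x1 t)), (pa_act_fiber X (pa_act X x1 t')), Hf. reflexivity.
    - rewrite pa_d_sym in Hd by exact Hf.
      eapply Rle_trans; [apply pa_act_lip; symmetry; exact Hf | exact Hd]. }
  assert (Hmf : im_mul S (im_inv S m) m = f).
  { destruct Hd2 as [Hp _].
    rewrite pa_act_fiber, pa_res_fiber, Hx1, im_one_r, im_one_l in Hp by exact Hfi.
    exact Hp. }
  rewrite <- Hmf in Hd2.
  destruct (HC m Hd2) as (c & g & Hc & Hg & Hm).
  exists c, g; split; [exact Hc|split; [exact Hg|]].
  rewrite <- Hm. unfold m.
  rewrite !pa_act_fiber, Hx1, !im_one_r in Hf.
  rewrite <- im_assoc, Hf, im_assoc, im_inv_1. reflexivity.
Qed.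

Theorem corollary3p7 (S : InverseMonoid) (X : PresheafAction S) :
  geodesic X -> proper_action X -> cobounded_action X ->
  quasi_finitely_generated S.
Proof.
  intros Hgeo Hprop Hcob.
  destruct Hcob as (x1 & T & Hx1 & HT & Hcov).
  destruct (Hprop x1 (T+1+T) Hx1 ltac:(lra)) as [C HC].
  exists (C ++ map (im_inv S) C). split.
  { intro m; split; intro H; apply in_app_or in H; apply in_or_app;
      destruct H as [H|H].
    - right; apply in_map; exact H.
    - left; apply in_map_iff in H; destruct H as (c & <- & Hc); rewrite inv_inv; exact Hc.
    - right; apply in_map_iff; exists (im_inv S m); split; [apply inv_inv|exact H].
    - left; apply in_map_iff in H; destruct H as (c & Hce & Hc).
      rewrite <- (inv_inv S m), <- Hce, inv_inv; exact Hc. }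
  set (G := fun s : S => In s (C ++ map (im_inv S) C) \/ idempotent s).
  set (P := fun u : S => exists a l, G a /\ Forall G l /\ u = prod_ne a l).
  assert (stepP : forall t t', P t ->
            dle X (pa_act X x1 t) (pa_act X x1 t') (T+1+T) -> P t').
  { intros t t' (a & l & Ga & Gl & Ht) Hd.
    destruct (step S X x1 C (T+1+T) Hx1 HC t t' Hd) as (c & g & Hc & Hg & Ht').
    exists c, (g :: a :: l). split; [left; apply in_or_app; left; exact Hc|].
    split; [constructor; [right; exact Hg| constructor; assumption]|].
    unfold prod_ne; simpl. rewrite fold_mul. rewrite Ht', Ht. reflexivity. }
  intro s.
  set (e := im_mul S (im_inv S s) s).
  assert (He : idempotent e).
  { unfold idempotent, e. rewrite im_assoc, im_inv_2. reflexivity. }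
  set (z0 := pa_act X x1 e). set (zn := pa_act X x1 s).
  assert (Hfib : pa_p X z0 = pa_p X zn).
  { unfold z0, zn. rewrite pa_res_fiber by exact He.
    rewrite pa_act_fiber, Hx1, im_one_l, im_one_r. reflexivity. }
  destruct (Hgeo z0 zn Hfib) as (g & Hg0 & HgD & Hgp).
  set (D := pa_dist X z0 zn) in *.
  assert (HD : 0 <= D) by (apply pa_d_nonneg; exact Hfib).
  assert (Hmin : forall x, 0 <= x -> 0 <= Rmin x D <= D).
  { intros x Hx; unfold Rmin; destruct (Rle_dec x D); lra. }
  assert (Hstep1 : forall x, 0 <= x -> Rabs (Rmin (x+1) D - Rmin x D) <= 1).
  { intros x Hx; unfold Rmin; destruct (Rle_dec (x+1) D); destruct (Rle_dec x D);
      unfold Rabs; destruct Rcase_abs; lra. }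
  assert (Claim : forall k : nat, exists t, P t /\
             dle X (pa_act X x1 t) (g (Rmin (INR k) D)) T).
  { induction k as [|k IH].
    - exists e. split.
      + exists e, nil. split; [right; exact He|split; [constructor|reflexivity]].
      + simpl. rewrite Rmin_left by exact HD. rewrite Hg0. unfold z0. split; [reflexivity|].
        assert (pa_dist X (pa_act X x1 e) (pa_act X x1 e) = 0) by (apply pa_d_zero; reflexivity).
        lra.
    - destruct IH as (t & Pt & Hdt).
      destruct (Hcov (g (Rmin (INR (Nat.succ k)) D))) as (t' & y & Hy & Hyeq).
      exists t'.
      assert (Hk := pos_INR k). rewrite S_INR in *.
      assert (Hgg : dle X (g (Rmin (INR k) D)) (g (Rmin (INR k + 1) D)) 1).
      { destruct (Hgp (Rmin (INR k) D) (Rmin (INR k + 1) D)) as [Hp1 Hd1];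
          try (apply Hmin; lra).
        destruct (Hgp (Rmin (INR k + 1) D) (Rmin (INR k) D)) as [Hp2 _];
          try (apply Hmin; lra).
        split; [congruence|]. rewrite Hd1, Rabs_minus_sym. apply Hstep1; lra. }
      assert (Hyt : dle X (g (Rmin (INR k + 1) D)) (pa_act X x1 t') T).
      { rewrite Hyeq. destruct Hy as [Hp Hd]. split.
        - rewrite !pa_act_fiber, Hp; reflexivity.
        - eapply Rle_trans; [apply pa_act_lip; symmetry; exact Hp|].
          rewrite pa_d_sym by (symmetry; exact Hp). exact Hd. }
      split.
      + apply (stepP t t' Pt). apply dle_trans with (y := g (Rmin (INR k + 1) D)); [|exact Hyt].
        apply dle_trans with (y := g (Rmin (INR k) D)); [exact Hdt|exact Hgg].
      + destruct Hy as [Hp Hd]. rewrite Hyeq. split.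
        * rewrite !pa_act_fiber, Hp; reflexivity.
        * eapply Rle_trans; [apply pa_act_lip; exact Hp|]. exact Hd. }
  destruct (archimed D) as [Hup _].
  assert (Hz : (0 < up D)%Z) by (apply lt_IZR; lra).
  destruct (Claim (Z.to_nat (up D))) as (t & Pt & Hdt).
  rewrite INR_IZR_INZ, Z2Nat.id in Hdt by lia.
  rewrite Rmin_right in Hdt by lra. rewrite HgD in Hdt.
  apply (stepP t s Pt). destruct Hdt as [Hp Hd]. unfold zn in *. split; [exact Hp|lra].
Qed.
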